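(* Let $k>l\ge0$ be integers, $\xi\in\mathbb{C}$, and $f:\mathbb{N}\to[0,\infty)$. Assume there exist $\kappa>0$ and $N\in\mathbb{N}$ such that $f(n)\ge\kappa|\xi|\beta^{kl}_n$ for all $n\ge N$. Then for all $\psi\in\mathcal{D}_0$, $$\|\xi(a^\dagger)^ka^l\psi+\xi^*(a^\dagger)^la^k\psi\|\le\frac{2}{\kappa}\|f(a^\dagger a)\psi\|+2|\xi|\beta^{kl}_{N-1}\|\psi\|.$$
   Context: $\mathbb{N}=\{0,1,2,\dots\}$. $\mathcal{H}$ is a separable complex Hilbert space with orthonormal basis $(\phi_n)_{n\in\mathbb{N}}$; $\mathcal{D}_0$ is the set of finite linear combinations of the $\phi_n$. The operators $a,a^\dagger$ have domain $\mathcal{D}_0$ and act by $a\phi_n=\sqrt{n}\,\phi_{n-1}$ ($a\phi_0=0$), $a^\dagger\phi_n=\sqrt{n+1}\,\phi_{n+1}$, extended linearly. $f(a^\dagger a)$ has domain $\mathcal{D}_0$ and $f(a^\dagger a)\phi_n=f(n)\phi_n$. For integers $x$ and $s\ge0$, $(x,s)=x(x+1)\cdots(x+s-1)$ ($=1$ if $s=0$), with the convention $(x,s)=0$ whenever $x$ is a negative integer; for integers $n$ and $k,l\ge0$, $\beta^{kl}_n=\sqrt{(n-l+1,l)(n-l+1,k)}$. *)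

(* Defs.v *)
From HB Require Import structures.
From mathcomp Require Import all_boot all_order all_algebra.
From mathcomp Require Import complex.
From mathcomp Require Import classical_sets reals.
Set Implicit Arguments. Unset Strict Implicit. Unset Printing Implicit Defensive.
Import Order.TTheory GRing.Theory Num.Theory.
Local Open Scope ring_scope.
Local Open Scope complex_scope.

(* The Hilbert space H with orthonormal basis (phi_n) is identified with the
   space of coefficient sequences nat -> C (C = R[i], R a real-number type);
   a vector psi = sum_n psi n phi_n. *)
Section Fock.
Variable R : realType.
Local Notation C := R[i].

Definition vec := nat -> C.

Definition cabs (z : C) : R := ComplexField.Normc.normc z.

Definition inD0 (psi : vec) : Prop := exists M : nat, forall n, (M <= n)%N -> psi n = 0.

Definition hnorm (psi : vec) : R :=
  Num.sqrt (sup [set (\sum_(n < M) cabs (psi n) ^+ 2) | M in [set: nat]]).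

(* annihilation a phi_n = sqrt n phi_{n-1}: coefficient of phi_n in a psi *)
Definition ann (psi : vec) : vec := fun n => (Num.sqrt (n.+1)%:R)%:C * psi n.+1.

(* creation a^dag phi_n = sqrt(n+1) phi_{n+1} *)
Definition adag (psi : vec) : vec :=
  fun n => match n with 0 => 0 | m.+1 => (Num.sqrt (m.+1)%:R)%:C * psi m end.

(* f(a^dag a) phi_n = f n phi_n *)
Definition fnum (f : nat -> R) (psi : vec) : vec := fun n => (f n)%:C * psi n.

(* rising factorial (x,s) = x(x+1)...(x+s-1), with (x,s) = 0 for x a negative integer *)
Definition poch (x : int) (s : nat) : R :=
  if (x < 0)%R then 0 else \prod_(i < s) (x + i%:Z)%:~R.

Definition beta (k l : nat) (n : int) : R :=
  Num.sqrt (poch (n - l%:Z + 1) l * poch (n - l%:Z + 1) k).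

End Fock.

(* Main.v *)
Require Import Defs.
From HB Require Import structures.
From mathcomp Require Import all_boot all_order all_algebra.
From mathcomp Require Import complex.
From mathcomp Require Import classical_sets reals.
From mathcomp Require Import zify ring lra.
Import Order.TTheory GRing.Theory Num.Theory.
Local Open Scope ring_scope.
Local Open Scope complex_scope.

Section Aux.
Variable R : realType.
Local Notation C := R[i].

Lemma cabs_ge0 (z : C) : 0 <= cabs z.
Proof. by rewrite /cabs /ComplexField.Normc.normc; case: z => a b; exact: sqrtr_ge0. Qed.

Lemma cabs0 : cabs (0 : C) = 0.
Proof. exact: ComplexField.Normc.normc0. Qed.

Lemma cabsM (x y : C) : cabs (x * y) = cabs x * cabs y.
Proof. exact: ComplexField.Normc.normcM. Qed.

Lemma cabsR (x : R) : cabs x%:C = `|x|.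
Proof. by rewrite /cabs /ComplexField.Normc.normc /= expr0n /= addr0 sqrtr_sqr. Qed.

Lemma cabsJ (z : C) : cabs z^* = cabs z.
Proof. by case: z => a b; rewrite /cabs /ComplexField.Normc.normc /= sqrrN. Qed.

Lemma cabsD2 (a b : C) : cabs (a + b) ^+ 2 <= 2 * cabs a ^+ 2 + 2 * cabs b ^+ 2.
Proof.
have h : cabs (a + b) <= cabs a + cabs b := le_normcD a b.
have ha := cabs_ge0 a; have hb := cabs_ge0 b; have hab := cabs_ge0 (a + b).
have h2 : cabs (a + b) ^+ 2 <= (cabs a + cabs b) ^+ 2.
  by rewrite ler_pXn2r // ?nnegrE ?addr_ge0.
move: h2; set x := cabs (a + b); set y := cabs a; set z := cabs b => h2.
have := sqr_ge0 (y - z).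
nra.
Qed.

Lemma sum_mono (G : nat -> R) j M : (forall n, 0 <= G n) -> (j <= M)%N ->
  \sum_(n < j) G n <= \sum_(n < M) G n.
Proof.
move=> G0 jM.
rewrite -[\sum_(n < j) G n](big_mkord xpredT) -[\sum_(n < M) G n](big_mkord xpredT).
rewrite (big_cat_nat (leq0n j) jM) /= lerDl sumr_ge0 //.
Qed.

Lemma sum_stable (G : nat -> R) M j : (forall n, (M <= n)%N -> G n = 0) -> (M <= j)%N ->
  \sum_(n < j) G n = \sum_(n < M) G n.
Proof.
move=> G0 Mj.
rewrite -[\sum_(n < j) G n](big_mkord xpredT) -[\sum_(n < M) G n](big_mkord xpredT).
rewrite (big_cat_nat (leq0n M) Mj) /= [X in _ + X]big_nat_cond [X in _ + X]big1 ?addr0 //.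
by move=> i /andP[/andP[Mi _] _]; apply: G0.
Qed.

Lemma sum_shiftR (G : nat -> R) L d : (forall n, 0 <= G n) ->
  \sum_(n < L) G (n + d)%N <= \sum_(n < L + d) G n.
Proof.
move=> G0; rewrite addnC big_split_ord /=.
rewrite (eq_bigr (fun i : 'I_L => G (d + i)%N)); last by move=> i _; rewrite addnC.
by rewrite -[X in X <= _]add0r lerD ?sumr_ge0 ?lexx.
Qed.

Lemma sum_shiftL (G : nat -> R) L d : (forall n, 0 <= G n) ->
  \sum_(n < L) (if (d <= n)%N then G (n - d)%N else 0) <= \sum_(n < L) G n.
Proof.
move=> G0; have [Ld|dL] := leqP L d.
  rewrite big1 ?sumr_ge0 // => i _; case: ifP => // di.
  by have := ltn_ord i; lia.
have -> : L = (d + (L - d))%N by lia.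
rewrite big_split_ord /= big1 ?add0r; last first.
  by move=> i _; case: ifP => // di; have := ltn_ord i; lia.
rewrite (eq_bigr (fun i : 'I_(L - d) => G i)); last first.
  by move=> i _; rewrite leq_addr addKn.
by apply: sum_mono => //; rewrite leq_addl.
Qed.

Lemma hnormE (F : vec R) M : (forall n, (M <= n)%N -> F n = 0) ->
  hnorm F = Num.sqrt (\sum_(n < M) cabs (F n) ^+ 2).
Proof.
move=> FM; rewrite /hnorm; congr Num.sqrt.
have G0 : forall n, 0 <= cabs (F n) ^+ 2 by move=> n; rewrite sqr_ge0.
have ub : ubound [set (\sum_(n < j) cabs (F n) ^+ 2) | j in [set: nat]]
             (\sum_(n < M) cabs (F n) ^+ 2).
  move=> x [j _ <-]; have [jM|Mj] := leqP j M.
    exact: (sum_mono _ _ _ G0 jM).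
  rewrite (@sum_stable (fun n => cabs (F n) ^+ 2) M) ?lexx //; last exact: ltnW.
  by move=> n Mn; rewrite FM // cabs0 expr0n.
apply/le_anti/andP; split.
  by apply: ge_sup => //; exists (\sum_(n < 0) cabs (F n) ^+ 2); exists 0%N.
have hs : has_sup [set (\sum_(n < j) cabs (F n) ^+ 2) | j in [set: nat]].
  split; last by exists (\sum_(n < M) cabs (F n) ^+ 2).
  by exists (\sum_(n < 0) cabs (F n) ^+ 2); exists 0%N.
by apply: (sup_upper_bound hs); exists M.
Qed.

Definition P (n s : nat) : R := \prod_(i < s) (n + i + 1)%:R.

Lemma P_ge0 n s : 0 <= P n s.
Proof. by apply: prodr_ge0 => i _; rewrite ler0n. Qed.

Lemma P_mono n m s : (n <= m)%N -> P n s <= P m s.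
Proof.
move=> nm; apply: ler_prod => i _; rewrite ler0n /= ler_nat; lia.
Qed.

Lemma iter_ann l (psi : vec R) n :
  iter l (@ann R) psi n = (Num.sqrt (P n l))%:C * psi (n + l)%N.
Proof.
elim: l n => [|l IH] n.
  by rewrite /= /P big_ord0 sqrtr1 mul1r addn0.
rewrite iterS /ann IH /P big_ord_recl /= sqrtrM ?ler0n // rmorphM mulrA.
congr (_ * _ * psi _); last by lia.
  by rewrite addn0 addn1.
congr ((Num.sqrt _)%:C); apply: eq_bigr => i _; rewrite /bump /=; congr (_%:R); lia.
Qed.

Lemma iter_adag k (phi : vec R) n :
  iter k (@adag R) phi n =
  if (k <= n)%N then (Num.sqrt (P (n - k) k))%:C * phi (n - k)%N else 0.
Proof.
elim: k n => [|k IH] n.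
  by rewrite /= /P big_ord0 sqrtr1 mul1r subn0.
rewrite iterS; case: n => [|m] //=.
rewrite IH ltnS subSS; case: ifP => km; last by rewrite mulr0.
rewrite /P big_ord_recr /= sqrtrM; last by apply: prodr_ge0 => i _; rewrite ler0n.
rewrite rmorphM subnK // addn1 mulrCA -mulrA; congr (_ * (_ * _)).
Qed.

Lemma poch_ge0 x s : 0 <= poch R x s.
Proof.
rewrite /poch; case: ifP => // /negbT; rewrite -leNgt => x0.
by apply: prodr_ge0 => i _; rewrite ler0z addr_ge0.
Qed.

Lemma poch_mono x y s : x <= y -> poch R x s <= poch R y s.
Proof.
move=> xy; rewrite {1}/poch; case: ifP => [_|/negbT]; first exact: poch_ge0.
rewrite -leNgt => x0; unfold poch; case: ifP => [y0|_]; first by have := lt_le_trans y0 (le_trans x0 xy); rewrite ltxx.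
apply: ler_prod => i _; rewrite ler0z addr_ge0 //= ler_int lerD2r //.
Qed.

Lemma beta_ge0 k l x : 0 <= beta R k l x.
Proof. exact: sqrtr_ge0. Qed.

Lemma beta_mono k l x y : x <= y -> beta R k l x <= beta R k l y.
Proof.
move=> xy; apply: ler_wsqrtr; apply: ler_pM; rewrite ?poch_ge0 //;
by apply: poch_mono; rewrite lerD2r lerD2r.
Qed.

Lemma betaE k l j : beta R k l (j + l)%N%:Z = Num.sqrt (P j l * P j k).
Proof.
rewrite /beta /poch.
have -> : ((j + l)%N%:Z - l%:Z + 1 = (j + 1)%N%:Z)%R by rewrite !PoszD; ring.
have h0 : ((j + 1)%N%:Z < 0)%R = false by rewrite ltNge le0z_nat.
rewrite h0.
rewrite /P; congr (Num.sqrt (_ * _)); apply: eq_bigr => i _;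
by rewrite -PoszD; congr (_%:R); lia.
Qed.

Lemma cabs2_le0 (z : R[i]) : cabs z ^+ 2 <= 0 -> z = 0.
Proof.
move=> h; apply: ComplexField.Normc.eq0_normc.
have : cabs z ^+ 2 = 0 by apply/le_anti; rewrite h sqr_ge0.
by move/eqP; rewrite sqrf_eq0 => /eqP.
Qed.
Lemma sq_le (x y : R) : 0 <= x -> x <= y -> x ^+ 2 <= y ^+ 2.
Proof. by move=> x0 xy; rewrite ler_pXn2r // nnegrE // (le_trans x0 xy). Qed.
End Aux.
Arguments sq_le {R}.
Arguments cabs_ge0 {R}.
Arguments beta_ge0 {R}.
Arguments P_ge0 {R}.

Theorem lemma3p4 (R : realType) (k l : nat) (xi : R[i]) (f : nat -> R) :
  (l < k)%N ->
  (forall n, 0 <= f n) ->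
  forall (kappa : R) (N : nat), 0 < kappa ->
  (forall n : nat, (N <= n)%N -> kappa * cabs xi * beta R k l n%:Z <= f n) ->
  forall psi : vec R, inD0 psi ->
  hnorm (fun n => xi * iter k (@adag R) (iter l (@ann R) psi) n
                  + xi^* * iter l (@adag R) (iter k (@ann R) psi) n)
  <= 2 / kappa * hnorm (fnum f psi)
     + 2 * cabs xi * beta R k l (N%:Z - 1) * hnorm psi.
Proof.
move=> lk f0 kappa N kp hf psi [M0 hM0].
set d := (k - l)%N.
set L := (M0 + k)%N.
set T := (L + d + l)%N.
pose w j := cabs xi ^+ 2 * beta R k l (j + l)%N%:Z ^+ 2 * cabs (psi (j + l)%N) ^+ 2.
pose B := cabs xi * beta R k l (N%:Z - 1).
pose b m := cabs (fnum f psi m) ^+ 2 / kappa ^+ 2 + B ^+ 2 * cabs (psi m) ^+ 2.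
have w0 : forall j, 0 <= w j by move=> j; apply: mulr_ge0; [apply: mulr_ge0|]; apply: sqr_ge0.
have b0 : forall m, 0 <= b m.
  move=> m; apply: addr_ge0; apply: mulr_ge0; rewrite ?invr_ge0; apply: sqr_ge0.
have hU : forall n, cabs (xi * iter k (@adag R) (iter l (@ann R) psi) n) ^+ 2
                    = if (k <= n)%N then w (n - k)%N else 0.
  move=> n; rewrite iter_adag; case: ifP => kn; last by rewrite mulr0 cabs0 expr0n.
  rewrite iter_ann /w betaE !cabsM !cabsR !ger0_norm ?sqrtr_ge0 //.
  rewrite !exprMn !sqr_sqrtr ?mulr_ge0 ?P_ge0 //.
  ring.
have hV : forall n, cabs (xi^* * iter l (@adag R) (iter k (@ann R) psi) n) ^+ 2
                    <= if (l <= n)%N then w (n - l + d)%N else 0.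
  move=> n; rewrite iter_adag; case: ifP => ln; last by rewrite mulr0 cabs0 expr0n.
  rewrite iter_ann /w.
  have e : (n - l + d + l = n - l + k)%N by rewrite /d; lia.
  rewrite e !cabsM cabsJ !cabsR !ger0_norm ?sqrtr_ge0 //.
  have hb : (Num.sqrt (P R (n - l) l)) ^+ 2 * (Num.sqrt (P R (n - l) k)) ^+ 2
            <= beta R k l (n - l + k)%N%:Z ^+ 2.
    have hm : beta R k l (n - l + l)%N%:Z <= beta R k l (n - l + k)%N%:Z.
      by apply: beta_mono; rewrite lez_nat; lia.
    rewrite betaE in hm.
    by rewrite -exprMn -sqrtrM ?P_ge0 // ler_pXn2r // ?nnegrE ?sqrtr_ge0 ?beta_ge0.
  have hcp : 0 <= cabs xi ^+ 2 * cabs (psi (n - l + k)%N) ^+ 2 by rewrite mulr_ge0 ?sqr_ge0.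
  rewrite !exprMn; nra.
have hW : forall j, w j <= b (j + l)%N.
  move=> j; rewrite /w /b /fnum cabsM cabsR ger0_norm // exprMn.
  have c0 := cabs_ge0 xi; have p0 := cabs_ge0 (psi (j + l)%N).
  have be0 := @beta_ge0 R k l (j + l)%N%:Z; have fj := f0 (j + l)%N.
  case: (leqP N (j + l)) => hN.
    have h := hf _ hN.
    set q := f (j + l)%N * cabs (psi (j + l)%N) / kappa.
    have h1 : cabs xi * beta R k l (j + l)%N%:Z * cabs (psi (j + l)%N) <= q.
      rewrite /q ler_pdivlMr //; nra.
    have h2 : (cabs xi * beta R k l (j + l)%N%:Z * cabs (psi (j + l)%N)) ^+ 2 <= q ^+ 2.
      exact: (sq_le _ _ (mulr_ge0 (mulr_ge0 c0 be0) p0) h1).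
    have -> : f (j + l)%N ^+ 2 * cabs (psi (j + l)%N) ^+ 2 / kappa ^+ 2 = q ^+ 2.
      by rewrite /q expr_div_n exprMn.
    rewrite -!exprMn.
    have : 0 <= B ^+ 2 * cabs (psi (j + l)%N) ^+ 2 by rewrite mulr_ge0 ?sqr_ge0.
    lra.
  have hbb : beta R k l (j + l)%N%:Z <= beta R k l (N%:Z - 1).
    apply: beta_mono; lia.
  have h1 : cabs xi * beta R k l (j + l)%N%:Z * cabs (psi (j + l)%N)
            <= B * cabs (psi (j + l)%N).
    by rewrite /B; apply: ler_wpM2r => //; apply: ler_wpM2l.
  have h2 : (cabs xi * beta R k l (j + l)%N%:Z * cabs (psi (j + l)%N)) ^+ 2
            <= (B * cabs (psi (j + l)%N)) ^+ 2.
    by apply: sq_le h1; rewrite mulr_ge0 // mulr_ge0.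
  have : 0 <= (f (j + l)%N ^+ 2 * cabs (psi (j + l)%N) ^+ 2) / kappa ^+ 2.
    by apply: mulr_ge0; [apply: mulr_ge0|rewrite invr_ge0]; apply: sqr_ge0.
  rewrite -!exprMn.
  lra.
pose Wt := \sum_(n < L + d) w n.
have sU : \sum_(n < L) cabs (xi * iter k (@adag R) (iter l (@ann R) psi) n) ^+ 2 <= Wt.
  under eq_bigr => i _ do rewrite hU.
  apply: le_trans (sum_shiftL _ w L k w0) _.
  by apply: sum_mono => //; rewrite leq_addr.
have sV : \sum_(n < L) cabs (xi^* * iter l (@adag R) (iter k (@ann R) psi) n) ^+ 2 <= Wt.
  apply: le_trans (ler_sum _ (fun (i : 'I_L) _ => hV i)) _.
  apply: le_trans (sum_shiftL _ (fun j => w (j + d)%N) L l _) _.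
    by move=> n; apply: w0.
  exact: sum_shiftR.
have sW : Wt <= \sum_(n < T) b n.
  apply: le_trans (ler_sum _ (fun (i : 'I_(L + d)) _ => hW i)) _.
  exact: sum_shiftR.
have sB : \sum_(n < T) b n = (\sum_(n < T) cabs (fnum f psi n) ^+ 2) / kappa ^+ 2
                            + B ^+ 2 * \sum_(n < T) cabs (psi n) ^+ 2.
  by rewrite big_split /= mulr_suml mulr_sumr.
have wz : forall j, (M0 <= j + l)%N -> w j = 0.
  by move=> j hj; rewrite /w hM0 // cabs0 expr0n mulr0.
rewrite (hnormE _ _ L); last first.
  move=> n Ln.
  have u0 : xi * iter k (@adag R) (iter l (@ann R) psi) n = 0.
    apply: cabs2_le0; rewrite hU; case: ifP => // kn.
    by rewrite wz // /L; lia.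
  have v0 : xi^* * iter l (@adag R) (iter k (@ann R) psi) n = 0.
    apply: cabs2_le0; apply: le_trans (hV n) _; case: ifP => // ln.
    by rewrite wz // /L /d; lia.
  by rewrite u0 v0 addr0.
rewrite (hnormE _ (fnum f psi) T); last first.
  by move=> n Tn; rewrite /fnum hM0 ?mulr0 // /T /L; lia.
rewrite (hnormE _ psi T); last first.
  by move=> n Tn; rewrite hM0 // /T /L; lia.
set Sw := \sum_(n < L) _.
set Sf := \sum_(n < T) cabs (fnum f psi n) ^+ 2.
set Sp := \sum_(n < T) cabs (psi n) ^+ 2.
have hSw : Sw <= 4 * (Sf / kappa ^+ 2 + B ^+ 2 * Sp).
  rewrite /Sw; apply: le_trans (ler_sum _ (fun (i : 'I_L) _ => cabsD2 R _ _)) _.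
  rewrite big_split /= -!mulr_sumr -sB.
  have := le_trans sU sW; have := le_trans sV sW; lra.
have Sf0 : 0 <= Sf by apply: sumr_ge0 => i _; apply: sqr_ge0.
have Sp0 : 0 <= Sp by apply: sumr_ge0 => i _; apply: sqr_ge0.
have B0 : 0 <= B by rewrite /B mulr_ge0 ?cabs_ge0 ?beta_ge0.
set a := Num.sqrt Sf; set bb := Num.sqrt Sp.
have a0 : 0 <= a := sqrtr_ge0 _.
have bb0 : 0 <= bb := sqrtr_ge0 _.
have ea : Sf = a ^+ 2 by rewrite sqr_sqrtr.
have eb : Sp = bb ^+ 2 by rewrite sqr_sqrtr.
set c := a / kappa.
have c0 : 0 <= c by rewrite /c divr_ge0 // ltW.
have ec : Sf / kappa ^+ 2 = c ^+ 2 by rewrite ea /c expr_div_n.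
have -> : 2 / kappa * a = 2 * c by rewrite /c mulrAC mulrA.
have -> : 2 * cabs xi * beta R k l (N%:Z - 1) * bb = 2 * (B * bb) by rewrite /B !mulrA.
have R0 : 0 <= 2 * c + 2 * (B * bb).
  by apply: addr_ge0; apply: mulr_ge0 => //; apply: mulr_ge0.
rewrite -(ger0_norm R0) -sqrtr_sqr; apply: ler_wsqrtr.
rewrite ec eb in hSw.
have : 0 <= c * (B * bb) by apply: mulr_ge0 => //; apply: mulr_ge0.
nra.
Qed.
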